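(* Let $k\ge 2$ be a fixed integer. For $n\ge 1$, let $Y_n$ be the random variable counting the indices $i$ with $1\le i\le n-k+1$ such that $p_i<p_{i+1}<\cdots<p_{i+k-1}$, where $p=p_1\cdots p_n$ is a permutation chosen uniformly at random among all permutations of length $n$. Then there exists a constant $c>0$ (depending only on $k$) such that for all $n\ge k$, \[\operatorname{Var}(Y_n)\ge c\,n.\]
   Context: Each permutation of length $n$ is selected with probability $1/n!$. *)

(* Defs.v *)
From mathcomp Require Import all_boot all_order all_algebra all_fingroup.
Set Implicit Arguments. Unset Strict Implicit. Unset Printing Implicit Defensive.
Import Order.TTheory GRing.Theory Num.Theory.

(* One-line notation p = p_1 ... p_n of s : 'S_n, values 0..n-1, positions 0-based. *)
Definition pword (n : nat) (s : 'S_n) : seq nat := [seq (val (s i)) | i <- enum 'I_n].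

Definition incr_run (n k : nat) (s : 'S_n) (i : nat) : bool :=
  all (fun j => nth 0 (pword s) (i + j) < nth 0 (pword s) (i + j).+1) (iota 0 k.-1).

(* Y_n(p) = #{ i : 1 <= i <= n-k+1 | p_i < ... < p_{i+k-1} } (0-based: i in [0, n-k]) *)
Definition Y (n k : nat) (s : 'S_n) : nat := count (incr_run k s) (iota 0 (n.+1 - k)).

Local Open Scope ring_scope.

Definition EY (n k : nat) : rat := (\sum_(s : 'S_n) (Y k s)%:R) / (n`!)%:R.
Definition VarY (n k : nat) : rat :=
  (\sum_(s : 'S_n) ((Y k s)%:R - EY n k) ^+ 2) / (n`!)%:R.

(* Main.v *)
Require Import Defs.
From mathcomp Require Import all_boot all_order all_algebra all_fingroup.
From mathcomp Require Import zify ring lra.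
Set Implicit Arguments. Unset Strict Implicit. Unset Printing Implicit Defensive.


Definition vv n (s : 'S_n) (x : nat) : nat := nth 0 (pword s) x.

Lemma vv_ord n (s : 'S_n) (x : 'I_n) : vv s x = s x.
Proof. by rewrite /vv /pword (nth_map x) ?size_enum_ord // nth_ord_enum. Qed.

Lemma vv_out n (s : 'S_n) (x : nat) : n <= x -> vv s x = 0.
Proof. by move=> h; rewrite /vv nth_default // size_map size_enum_ord. Qed.

Lemma sorted_iota (f : nat -> nat) L i :
  sorted ltn (map f (iota i L)) = all (fun j => f j < f j.+1) (iota i L.-1).
Proof.
elim: L i => [|L IH] i //=.
case: L IH => [|L] IH //=.
by rewrite -IH.
Qed.

Lemma run_iota L n (s : 'S_n) i :
  incr_run L s i = sorted ltn (map (vv s) (iota i L)).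
Proof.
rewrite sorted_iota /incr_run -(addn0 i) iotaDl all_map addn0.
by apply: eq_all => j.
Qed.

Lemma eq_run L n (s1 s2 : 'S_n) j :
  (forall x, j <= x -> vv s1 x = vv s2 x) -> incr_run L s1 j = incr_run L s2 j.
Proof.
move=> H; rewrite /incr_run; apply: eq_all => l.
rewrite -/(vv s1 (j + l)) -/(vv s1 (j + l).+1) -/(vv s2 (j + l)) -/(vv s2 (j + l).+1).
by rewrite !H // ?leq_addr // ltnW // ltnS leq_addr.
Qed.

Lemma swap_pot (n : nat) (u w : nat -> nat) (a : nat) : a.+1 < n ->
  w a = u a.+1 -> w a.+1 = u a -> (forall x, x != a -> x != a.+1 -> w x = u x) ->
  u a.+1 < u a ->
  \sum_(0 <= x < n) x * u x < \sum_(0 <= x < n) x * w x.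
Proof.
move=> han h1 h2 h3 hlt.
rewrite !(big_cat_nat (leq0n a) (ltnW (ltnW han))) /=.
have -> : \sum_(0 <= x < a) x * w x = \sum_(0 <= x < a) x * u x.
  apply: eq_big_nat => x /andP[_ hx]; rewrite h3 // neq_ltn ?hx //.
  by rewrite ltnS ltnW.
rewrite ltn_add2l.
have e1 : a < n by exact: ltnW.
rewrite !(big_ltn (m:=a) e1) !(big_ltn (m:=a.+1) han) h1 h2.
have -> : \sum_(a.+2 <= x < n) x * w x = \sum_(a.+2 <= x < n) x * u x.
  by apply: eq_big_nat => x /andP[hx _]; rewrite h3 // gtn_eqF // ltnW.
rewrite !addnA ltn_add2r.
change (a * u a + u a.+1 + a * u a.+1 < a * u a.+1 + u a + a * u a).
lia.
Qed.


Section Core.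
Variables (n L i : nat).
Hypothesis hiL : i + L <= n.

Definition Aset : {set 'I_n} := [set x : 'I_n | i <= x < i + L].



Lemma vvM (h s : 'S_n) (x : 'I_n) : vv (h * s)%g x = vv s (h x).
Proof. by rewrite !vv_ord permM. Qed.

Lemma mem_w (s h : 'S_n) y : perm_on Aset h ->
  (y \in map (vv (h * s)%g) (iota i L)) = [exists x in Aset, y == s x].
Proof.
move=> hA; apply/mapP/existsP.
- move=> [l]; rewrite mem_iota => hl ->.
  have hln : l < n by lia.
  exists (h (Ordinal hln)).
  rewrite perm_closed // inE /= (vvM h s (Ordinal hln)) vv_ord eqxx andbT.
  by apply/andP; split; lia.
- move=> [x /andP[hx /eqP ->]].
  exists (val ((h^-1)%g x)); last by rewrite vvM permKV vv_ord.
  move: hx; rewrite -(perm_closed _ (perm_onV hA)) inE mem_iota.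
  done.
Qed.

Lemma sort_unique (s h1 h2 : 'S_n) : perm_on Aset h1 -> perm_on Aset h2 ->
  incr_run L (h1 * s)%g i -> incr_run L (h2 * s)%g i -> h1 = h2.
Proof.
move=> hA1 hA2; rewrite !run_iota => r1 r2.
have e : map (vv (h1 * s)%g) (iota i L) = map (vv (h2 * s)%g) (iota i L).
  apply: (irr_sorted_eq ltn_trans ltnn r1 r2) => y.
  by rewrite !mem_w.
apply/permP => x.
case hx : (x \in Aset); last by rewrite (out_perm hA1) ?(out_perm hA2) ?hx.
move: hx; rewrite inE => /andP[hx1 hx2].
have := congr1 (nth 0 ^~ (x - i)) e.
rewrite !(nth_map 0) ?size_iota; try lia.
rewrite nth_iota; last lia.
rewrite (_ : i + (x - i) = x); last lia.
by rewrite !vvM !vv_ord => /val_inj/perm_inj.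
Qed.

Lemma tperm_onA (a b : 'I_n) : a \in Aset -> b \in Aset -> perm_on Aset (tperm a b).
Proof.
move=> ha hb; apply/subsetP => x; rewrite inE.
case: (eqVneq x a) => [->//|hxa]; case: (eqVneq x b) => [->//|hxb].
by rewrite tpermD ?eqxx // eq_sym.
Qed.

Definition Phi (s h : 'S_n) := \sum_(0 <= x < n) x * vv (h * s)%g x.

Lemma sort_exists (s : 'S_n) : exists h, perm_on Aset h && incr_run L (h * s)%g i.
Proof.
case: (@arg_maxnP _ 1%g (perm_on Aset) (Phi s) (perm_on1 _)) => h hA hmax.
exists h; rewrite hA /=.
apply/negPn/negP; rewrite /incr_run => /allPn [j]; rewrite mem_iota => hj hn.
have ha : i + j < n by lia.
have hb : (i + j).+1 < n by lia.
set a := Ordinal ha; set b := Ordinal hb.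
have hab : a != b by apply/eqP => /(congr1 val) /=; lia.
have hlt : vv (h * s)%g (i + j).+1 < vv (h * s)%g (i + j).
  have hle : vv (h * s)%g (i + j).+1 <= vv (h * s)%g (i + j) by rewrite leqNgt.
  rewrite ltn_neqAle hle andbT.
  apply/eqP => /esym.
  rewrite (_ : i + j = a) // (_ : (i + j).+1 = b) // !vv_ord => /val_inj/perm_inj.
  by apply/eqP.
have hgA : perm_on Aset (tperm a b * h)%g.
  by apply: perm_onM => //; apply: tperm_onA; rewrite inE /=; lia.
have := hmax _ hgA; rewrite /geq /= leqNgt => /negP; apply.
apply: (@swap_pot n _ _ (i + j)) => //.
- by rewrite (_ : i + j = a) // -mulgA vvM tpermL.
- by rewrite (_ : (i + j).+1 = b) // -mulgA vvM tpermR.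
- move=> x hx1 hx2.
  case: (ltnP x n) => hxn; last by rewrite !vv_out.
  have -> : x = Ordinal hxn by [].
  rewrite -mulgA (vvM (tperm a b) (h * s)%g (Ordinal hxn)) tpermD //.
  + by apply/eqP => /(congr1 val) /= e; move: hx1; rewrite e eqxx.
  + by apply/eqP => /(congr1 val) /= e; move: hx2; rewrite e eqxx.
Qed.

Lemma card_sort (s : 'S_n) :
  \sum_(h | perm_on Aset h) (incr_run L (h * s)%g i : nat) = 1.
Proof.
have [h0 /andP[h0A h0r]] := sort_exists s.
rewrite (bigD1 h0) //= h0r big1 // => h /andP[hA hne].
case r: (incr_run L (h * s)%g i) => //.
by rewrite (sort_unique hA h0A r h0r) eqxx in hne.
Qed.

Lemma ordA (l : 'I_L) : i + l < n.
Proof. by apply: leq_trans hiL; rewrite ltn_add2l. Qed.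

Lemma card_Aset : #|Aset| = L.
Proof.
have -> : Aset = [set (Ordinal (ordA l)) | l : 'I_L].
  apply/setP => x; rewrite inE; apply/idP/imsetP.
  - move=> /andP[h1 h2].
    have hl : x - i < L by lia.
    exists (Ordinal hl) => //; apply: val_inj => /=; lia.
  - by move=> [l _ ->] /=; rewrite leq_addr ltn_add2l ltn_ord.
rewrite card_imset ?card_ord //.
by move=> l1 l2 /(congr1 val) /= /eqP; rewrite eqn_add2l => /eqP /val_inj.
Qed.

Lemma core (Q : 'S_n -> bool) :
  (forall h s, perm_on Aset h -> Q (h * s)%g = Q s) ->
  \sum_(s : 'S_n) (Q s : nat) = L`! * \sum_(s : 'S_n) ((incr_run L s i && Q s) : nat).
Proof.
move=> hQ.
transitivity (\sum_(s : 'S_n) \sum_(h | perm_on Aset h) ((Q s && incr_run L (h * s)%g i) : nat)).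
  apply: eq_bigr => s _.
  case: (Q s) => /=; first by rewrite card_sort.
  by rewrite big1.
rewrite exchange_big /=.
transitivity (\sum_(h | perm_on Aset h) \sum_(s : 'S_n) ((incr_run L s i && Q s) : nat)).
  apply: eq_bigr => h hA.
  rewrite (eq_bigr (fun s => ((Q (h * s)%g && incr_run L (h * s)%g i) : nat))); last first.
    by move=> s _; rewrite hQ.
  rewrite -(reindex_inj (mulgI h) (P := xpredT) (F := fun s => ((Q s && incr_run L s i) : nat))) /=.
  by apply: eq_bigr => s _; rewrite andbC.
by rewrite sum_nat_const card_perm card_Aset.
Qed.


End Core.


Lemma C1 n k i : i + k <= n ->
  n`! = k`! * \sum_(s : 'S_n) (incr_run k s i : nat).
Proof.
move=> h.
have := core h (Q := xpredT) (fun _ _ _ => erefl).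
rewrite sum_nat_const card_Sn muln1 => ->.
by apply: congr1; apply: eq_bigr => s _; rewrite andbT.
Qed.

Lemma C2 n k i j : i + k <= j -> j + k <= n ->
  n`! = k`! * (k`! * \sum_(s : 'S_n) ((incr_run k s i && incr_run k s j) : nat)).
Proof.
move=> hij hjn.
have hin : i + k <= n by apply: leq_trans hij (leq_trans (leq_addr _ _) hjn).
rewrite (C1 hjn) -(core hin (Q := fun s => incr_run k s j)) //.
move=> h s hA; apply: eq_run => x hx.
case: (ltnP x n) => hxn; last by rewrite !vv_out.
have -> : x = Ordinal hxn by [].
rewrite vvM (out_perm hA) // inE; apply/negP => /andP[_ h2].
by move: hx; rewrite leqNgt (leq_trans h2 hij).
Qed.

Lemma run2 n (s : 'S_n) i :
  incr_run 2 s i && incr_run 2 s i.+1 = incr_run 3 s i.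
Proof. by rewrite /incr_run /= !andbT addn0 addn1 addn0. Qed.

Lemma C3 n i : i + 3 <= n ->
  n`! = 6 * \sum_(s : 'S_n) ((incr_run 2 s i && incr_run 2 s i.+1) : nat).
Proof.
move=> h; rewrite (C1 h); congr (_ * _).
by apply: eq_bigr => s _; rewrite run2.
Qed.

Import Order.TTheory GRing.Theory Num.Theory.

Lemma count_sum (a : pred nat) m : count a (iota 0 m) = \sum_(i < m) (a i : nat).
Proof.
elim: m => [|m IH]; first by rewrite big_ord0.
have -> : iota 0 m.+1 = iota 0 m ++ [:: m] by rewrite -addn1 iotaD.
by rewrite count_cat big_ord_recr -IH /= addn0.
Qed.

Lemma range_sum m a b : \sum_(j < m) ((a <= j < b) : nat) = minn m b - a.
Proof.
elim: m => [|m IH]; first by rewrite big_ord0 min0n.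
rewrite big_ord_recr /= IH.
case: (boolP (a <= m < b)) => h /=; lia.
Qed.

Local Open Scope ring_scope.

Lemma Var_eq n k : VarY n k =
  (\sum_(s : 'S_n) ((Y k s)%:R) ^+ 2) / (n`!)%:R - (EY n k) ^+ 2.
Proof.
rewrite /VarY.
set N := (n`!)%:R; set mu := EY n k.
have hN : N != 0 by rewrite pnatr_eq0 -lt0n fact_gt0.
have e : mu = (\sum_(s : 'S_n) (Y k s)%:R) / N by [].
have -> : \sum_(s : 'S_n) ((Y k s)%:R - mu) ^+ 2 =
   \sum_(s : 'S_n) ((Y k s)%:R) ^+ 2 - 2 * mu * \sum_(s : 'S_n) (Y k s)%:R + N * mu ^+ 2.
  rewrite mulr_sumr -sumrB.
  have -> : N * mu ^+ 2 = \sum_(s : 'S_n) mu ^+ 2.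
    by rewrite sumr_const card_Sn mulr_natl.
  rewrite -big_split /=; apply: eq_bigr => s _; ring.
have e' : \sum_(s : 'S_n) (Y k s)%:R = mu * N by rewrite e divfK.
rewrite e'; field; exact: hN.
Qed.

Lemma fact_bound k : (3 <= k)%N -> (6 * (2 * k - 1) <= 5 * k`!)%N.
Proof.
move=> hk; have [j ->] : exists j, k = (j + 3)%N by exists (k - 3)%N; lia.
elim: j => [|j IH] //.
rewrite (_ : (j.+1 + 3 = (j + 3).+1)%N) // factS.
have := fact_gt0 (j + 3); nia.
Qed.

Lemma rr n k (s : 'S_n) i j :
  ((incr_run k s i : nat)%:R * (incr_run k s j : nat)%:R : rat) =
  ((incr_run k s i && incr_run k s j) : nat)%:R.
Proof. by case: incr_run; case: incr_run; rewrite ?mulr0 ?mulr1 ?mul0r. Qed.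

Lemma nat_div n (S a : nat) : n`! = (a * S)%N -> (0 < a)%N ->
  (S%:R : rat) = (n`!)%:R / a%:R.
Proof.
move=> e ha; rewrite e natrM; field.
by rewrite pnatr_eq0 -lt0n.
Qed.

Lemma aux3 (a b n k : nat) : (b < n.+1 - k)%N -> k = 2%N -> b = a.+1 -> (a + 3 <= n)%N.
Proof. lia. Qed.

Lemma aux2 (a b : nat) : a != b -> ~~ ((a + 2 <= b)%N || (b + 2 <= a)%N) -> b = a.+1 \/ a = b.+1.
Proof. lia. Qed.

Section Main.
Variables (k n : nat).
Hypotheses (hk : (2 <= k)%N) (hn : (k <= n)%N).

Let m := (n.+1 - k)%N.
Let N : rat := (n`!)%:R.
Let K : rat := (k`!)%:R.
Let p : rat := K^-1.

Definition r (s : 'S_n) (i : nat) : rat := (incr_run k s i : nat)%:R.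

Lemma K_gt0 : 0 < K.
Proof. by rewrite /K ltr0n fact_gt0. Qed.

Lemma sum_r (i : 'I_m) : \sum_(s : 'S_n) r s i = N * p.
Proof.
have hi : (i + k <= n)%N by have := ltn_ord i; rewrite /m; lia.
rewrite /r -natr_sum (nat_div (C1 hi)) ?fact_gt0 //.
Qed.

Lemma Yr (s : 'S_n) : (Y k s)%:R = \sum_(i < m) r s i.
Proof. by rewrite /Y count_sum natr_sum. Qed.

Lemma S1 : \sum_(s : 'S_n) (Y k s)%:R = m%:R * (N * p).
Proof.
under eq_bigr do rewrite Yr.
rewrite exchange_big /=.
under eq_bigr do rewrite sum_r.
by rewrite sumr_const card_ord mulr_natl.
Qed.

Lemma EY_eq : EY n k = m%:R * p.
Proof.
rewrite /EY S1 -/N; field.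
by rewrite /N pnatr_eq0 -lt0n fact_gt0.
Qed.

Definition far (i j : nat) := ((i + k <= j) || (j + k <= i))%N.

Definition F (i j : 'I_m) : rat :=
  if i == j then p else if far i j then p ^+ 2 else if k == 2%N then 6^-1 else 0.

Lemma N_neq0 : N != 0.
Proof. by rewrite /N pnatr_eq0 -lt0n fact_gt0. Qed.

Lemma pairF (i j : 'I_m) : N * F i j <= \sum_(s : 'S_n) r s i * r s j.
Proof.
have hi : (i < m)%N := ltn_ord i.
have hj : (j < m)%N := ltn_ord j.
rewrite /F; case: eqVneq => [<-|hij].
  rewrite (eq_bigr (fun s => r s i)) ?sum_r // => s _.
  by rewrite /r rr andbb.
under eq_bigr do rewrite /r rr.
rewrite -natr_sum.
case: ifP => hfar.
  have hK : K != 0 by rewrite /K pnatr_eq0 -lt0n fact_gt0.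
  case/orP: hfar => hf.
  - have hjn : (j + k <= n)%N by move: hj; rewrite /m => hj; lia.
    rewrite (nat_div (etrans (C2 hf hjn) (mulnA _ _ _))) ?muln_gt0 ?fact_gt0 // natrM.
    by rewrite le_eqVlt; apply/orP; left; apply/eqP; rewrite /p -/K; field.
  - have hin : (i + k <= n)%N by move: hi; rewrite /m => hi; lia.
    rewrite (eq_bigr (fun s => ((incr_run k s j && incr_run k s i) : nat))); last first.
      by move=> s _; rewrite andbC.
    rewrite (nat_div (etrans (C2 hf hin) (mulnA _ _ _))) ?muln_gt0 ?fact_gt0 // natrM.
    by rewrite le_eqVlt; apply/orP; left; apply/eqP; rewrite /p -/K; field.
case: ifP => hk2; last first.
  by rewrite mulr0 ler0n.
move/eqP: hk2 => hk2.
have hij' : ((i : nat) != j) by [].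
move: hfar; rewrite /far hk2 => hfar.
move/negbT: hfar => hfar.
have [hji|hij2] := aux2 hij' hfar.
- have h3 : (i + 3 <= n)%N by exact: aux3 hj hk2 hji.
  rewrite hji (nat_div (C3 h3)) //.
- have h3 : (j + 3 <= n)%N by exact: aux3 hi hk2 hij2.
  rewrite hij2 (eq_bigr (fun s => ((incr_run 2 s j && incr_run 2 s j.+1) : nat))); last first.
    by move=> s _; rewrite andbC.
  rewrite (nat_div (C3 h3)) //.
Qed.

Lemma S2 : N * \sum_(i < m) \sum_(j < m) F i j <= \sum_(s : 'S_n) ((Y k s)%:R) ^+ 2.
Proof.
have -> : \sum_(s : 'S_n) ((Y k s)%:R) ^+ 2 =
    \sum_(i < m) \sum_(j < m) \sum_(s : 'S_n) r s i * r s j.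
  under eq_bigr do rewrite Yr expr2 mulr_suml.
  under eq_bigr do under eq_bigr do rewrite mulr_sumr.
  rewrite exchange_big /=; apply: eq_bigr => i _.
  by rewrite exchange_big.
rewrite mulr_sumr; apply: ler_sum => i _.
rewrite mulr_sumr; apply: ler_sum => j _.
exact: pairF.
Qed.

Lemma cnt_bound (i : 'I_m) :
  (\sum_(j < m) (((j : nat) != i) && ~~ far i j) <= 2 * (k - 1))%N.
Proof.
apply: (@leq_trans (\sum_(j < m) (((i.+1 <= j < i + k) : nat) + ((i.+1 - k <= j < i) : nat))))%N.
  apply: leq_sum => j _; rewrite /far; lia.
rewrite big_split /= !range_sum; lia.
Qed.

Lemma row (i : 'I_m) : p / 6 <= \sum_(j < m) (F i j - p ^+ 2).
Proof.
set e := (if k == 2%N then 6^-1 else 0) - p ^+ 2.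
have pt : forall j : 'I_m, F i j - p ^+ 2 =
    ((j == i) : nat)%:R * (p - p ^+ 2) + ((((j : nat) != i) && ~~ far i j) : nat)%:R * e.
  move=> j; rewrite /F eq_sym; case: eqVneq => [->|hij] /=.
    by rewrite eqxx /= mul1r mul0r addr0.
  have -> : ((j : nat) != i) = true by apply/negP => /eqP /val_inj h; rewrite h eqxx in hij.
  rewrite mul0r add0r /=; case: ifP => hf /=.
    by rewrite mul0r subrr.
  by rewrite mul1r.
under eq_bigr do rewrite pt.
rewrite big_split /= -!mulr_suml.
have -> : \sum_(j < m) ((j == i) : nat)%:R = 1 :> rat.
  rewrite (bigD1 i) //= eqxx big1 ?addr0 // => j /negbTE -> //.
rewrite -natr_sum mul1r.
have hp : 0 < p by rewrite /p invr_gt0 K_gt0.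
have he : e <= 0.
  rewrite /e; case: ifP => /eqP hk2.
    have hp2 : p = 2^-1 by rewrite /p /K hk2.
    rewrite hp2; lra.
  by rewrite subr_le0 sqr_ge0.
apply: (@le_trans _ _ ((p - p ^+ 2) + (2 * (k - 1))%:R * e)); last first.
  by rewrite lerD2l ler_wnM2r // ler_nat cnt_bound.
rewrite /e; case: ifP => /eqP hk2.
  have hp2 : p = 2^-1 by rewrite /p /K hk2.
  rewrite hp2 hk2 (_ : (2 * (2 - 1))%N = 2%N); last by [].
  by rewrite le_eqVlt; apply/orP; left; apply/eqP; field.
have hk3 : (3 <= k)%N by lia.
have hfb := fact_bound hk3.
have H1 : (2 * k - 1)%:R * p <= 5 / 6 :> rat.
  rewrite /p ler_pdivrMr ?K_gt0 // /K.
  rewrite -[(5 / 6 : rat) * _]mulrA -(ler_pM2l (_ : (0 : rat) < 6)) //.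
  rewrite mulrA mulrA (_ : (6 : rat) * (5 / 6) = 5); last by field.
  by rewrite -!natrM ler_nat.
have -> : ((2 * (k - 1))%:R : rat) = (2 * k - 1)%:R - 1.
  apply/eqP; rewrite eq_sym subr_eq natr1 eqr_nat; apply/eqP; lia.
set t := ((2 * k - 1)%:R : rat).
rewrite add0r; nra.
Qed.

Theorem main_bound : (m%:R * p) / 6 <= VarY n k.
Proof.
rewrite Var_eq EY_eq.
have hN := N_neq0.
have hNp : 0 < N by rewrite /N ltr0n fact_gt0.
apply: (@le_trans _ _ (\sum_(i < m) \sum_(j < m) F i j - (m%:R * p) ^+ 2)); last first.
  rewrite lerD2r ler_pdivlMr // mulrC; exact: S2.
have -> : \sum_(i < m) \sum_(j < m) F i j - (m%:R * p) ^+ 2 =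
    \sum_(i < m) \sum_(j < m) (F i j - p ^+ 2).
  under [RHS]eq_bigr do rewrite sumrB sumr_const card_ord.
  rewrite sumrB sumr_const card_ord -mulr_natl -mulr_natl exprMn expr2; ring.
apply: (@le_trans _ _ (\sum_(i < m) (p / 6))).
  rewrite sumr_const card_ord le_eqVlt; apply/orP; left; apply/eqP; rewrite -mulr_natl; ring.
by apply: ler_sum => i _; exact: row.
Qed.

End Main.

Unset Implicit Arguments.
Import Order.TTheory GRing.Theory Num.Theory.
Local Open Scope ring_scope.

Theorem proposition3p4 (k : nat) (hk : (2 <= k)%N) :
  exists c : rat, 0 < c /\ forall n : nat, (k <= n)%N -> c * n%:R <= VarY n k.
Proof.
set p : rat := (k`!%:R)^-1.
have hp : 0 < p by rewrite /p invr_gt0 ltr0n fact_gt0.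
have hk0 : (0 : rat) < k%:R by rewrite ltr0n; lia.
exists (p / 6 / k%:R); split.
  by rewrite !divr_gt0.
move=> n hn.
apply: le_trans (main_bound hk hn).
have hnk : (n <= (n.+1 - k) * k)%N by nia.
have : (n%:R : rat) <= (n.+1 - k)%:R * k%:R by rewrite -natrM ler_nat.
rewrite -ler_pdivrMr // => H.
rewrite -/p (mulrC _ p) -!mulrA mulrCA [_ / 6]mulrC.
rewrite (_ : 6^-1 * (p * (k%:R^-1 * n%:R)) = (p / 6) * (n%:R / k%:R)); last by ring.
rewrite (_ : p * (6^-1 * (n.+1 - k)%:R) = (p / 6) * (n.+1 - k)%:R); last by ring.
rewrite ler_pM2l ?divr_gt0 //.
Qed.
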